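(* Let $G$ be a finite digraph. If $\mathrm{Pol}(G)\not\models\Sigma_M$, then $G\le T_3$.
   Context: A digraph is $(V,E)$ with $E\subseteq V^2$. A polymorphism of arity $k$ of $H$ is a homomorphism $H^k\to H$, where $H^k$ has vertex set $V^k$ and edges $((u_i),(v_i))$ with $(u_i,v_i)\in E$ for all $i$; $\mathrm{Pol}(H)$ is the set of all polymorphisms. $\mathrm{Pol}(H)\models\Sigma_M$ means there exists a ternary $f\in\mathrm{Pol}(H)$ with $f(y,y,x)=f(x,x,x)=f(x,y,y)$ for all $x,y\in V$. $T_3=(\{0,1,2\},<)$. A primitive positive formula is $\exists y_1,\dots,y_n(\psi_1\wedge\dots\wedge\psi_m)$ with each $\psi_i$ being $\bot$, $z_1=z_2$, or $E(z_1,z_2)$; a pp power of $H$ of dimension $d$ is the digraph on $V^d$ with edges $\{(u,v):\phi(u,v)\text{ holds in }H\}$ for a pp formula $\phi(x_1,\dots,x_d,y_1,\dots,y_d)$. $H\le G$ means $G$ is homomorphically equivalent (homomorphisms in both directions) to a pp power of $H$. *)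

(* Defs.v *)
From mathcomp Require Import all_boot.
Set Implicit Arguments. Unset Strict Implicit. Unset Printing Implicit Defensive.

Definition ternary_pol (V : finType) (E : rel V) (f : V -> V -> V -> V) : Prop :=
  forall u1 u2 u3 v1 v2 v3 : V, E u1 v1 -> E u2 v2 -> E u3 v3 ->
    E (f u1 u2 u3) (f v1 v2 v3).

Definition Pol_models_SigmaM (V : finType) (E : rel V) : Prop :=
  exists f : V -> V -> V -> V, ternary_pol E f /\
    forall x y : V, f y y x = f x x x /\ f x x x = f x y y.

Inductive atom (X : Type) : Type :=
  | ABot : atom X
  | AEq : X -> X -> atom X
  | AEdge : X -> X -> atom X.

(* Variables of a pp formula phi(x_1..x_d, y_1..y_d) with n existentially
   quantified variables: inl (inl i) = x_i, inl (inr i) = y_i, inr j = bound var j. *)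
Definition ppvar (d n : nat) : Type := (('I_d + 'I_d) + 'I_n)%type.

Record ppformula (d : nat) : Type := PPFormula {
  pp_nbound : nat;
  pp_atoms : seq (atom (ppvar d pp_nbound)) }.

Definition atom_holds (V : Type) (E : V -> V -> bool) (X : Type)
  (s : X -> V) (a : atom X) : Prop :=
  match a with
  | ABot => False
  | AEq z1 z2 => s z1 = s z2
  | AEdge z1 z2 => E (s z1) (s z2)
  end.

Fixpoint List_In (X : Type) (a : X) (l : seq X) : Prop :=
  match l with [::] => False | b :: l' => b = a \/ List_In a l' end.

Definition pp_holds (V : finType) (E : rel V) (d : nat) (phi : ppformula d)
  (u v : {ffun 'I_d -> V}) : Prop :=
  exists w : 'I_(pp_nbound phi) -> V,
    let s := fun z : ppvar d (pp_nbound phi) =>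
      match z with
      | inl (inl i) => u i
      | inl (inr i) => v i
      | inr j => w j
      end in
    forall a, List_In a (pp_atoms phi) -> atom_holds E s a.

Definition is_hom (A B : Type) (EA : A -> A -> Prop) (EB : B -> B -> Prop)
  (h : A -> B) : Prop := forall a b, EA a b -> EB (h a) (h b).

Definition hom_equiv (A B : Type) (EA : A -> A -> Prop) (EB : B -> B -> Prop) : Prop :=
  (exists h : A -> B, is_hom EA EB h) /\ (exists g : B -> A, is_hom EB EA g).

(* H <= G : G is homomorphically equivalent to a pp power of H. *)
Definition pp_constructs (V : finType) (E : rel V) (W : finType) (F : rel W) : Prop :=
  exists (d : nat) (phi : ppformula d),
    hom_equiv (pp_holds E phi) (fun a b : W => F a b).

Definition T3_edge : rel 'I_3 := fun a b => (a < b)%N.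

(* Main.v *)
From Stdlib Require Import ClassicalEpsilon.
Require Import Defs.
From mathcomp Require Import all_boot.
Set Implicit Arguments. Unset Strict Implicit. Unset Printing Implicit Defensive.

Lemma LI_map (X Y : Type) (f : X -> Y) (s : seq X) a :
  List_In a (map f s) -> exists x, List_In x s /\ f x = a.
Proof.
elim: s => [|b s IH] //= [<-|H]; first by exists b; split; [left|].
by case: (IH H) => x [H1 H2]; exists x; split; [right|].
Qed.

Lemma LI_map2 (X Y : Type) (f : X -> Y) (s : seq X) x :
  List_In x s -> List_In (f x) (map f s).
Proof. by elim: s => [|b s IH] //= [->|H]; [left|right; apply: IH]. Qed.

Lemma LI_in (X : eqType) (x : X) s : x \in s -> List_In x s.
Proof.
elim: s => [|b s IH] //=; rewrite in_cons => /orP [/eqP ->|H]; [by left|right; exact: IH].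
Qed.

Lemma LI_mem (X : eqType) (x : X) s : List_In x s -> x \in s.
Proof.
elim: s => [|b s IH] //= [->|H]; rewrite in_cons ?eqxx //.
by rewrite IH ?orbT.
Qed.

Section Constr.
Variables (V : finType) (E : rel V).

Definition TT := (V * V * V)%type.
Definition dd := #|{: TT}|.
Definition CC := ('I_3 * 'I_dd * 'I_dd)%type.

Definition good (c : CC) : bool :=
  let: (k, i, j) := c in
  let t := enum_val i in let s := enum_val j in
  if val k == 0 then [&& E t.1.1 s.1.1, E t.1.2 s.1.2 & E t.2 s.2]
  else if val k == 1 then j == enum_rank (t.1.1, t.1.1, t.1.2)
  else j == enum_rank (t.1.2, t.2, t.2).

Definition atom_of (c : CC) : atom (ppvar dd dd) :=
  let: (k, i, j) := c in
  if val k == 0 then AEdge (inr i) (inr j)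
  else if val k == 1 then AEq (inl (inl i)) (inr j)
  else AEq (inl (inr i)) (inr j).

Definition phi : ppformula dd :=
  @PPFormula dd dd (map atom_of (filter good (enum {: CC}))).

Definition polyT (h : TT -> V) := forall t s : TT,
  E t.1.1 s.1.1 -> E t.1.2 s.1.2 -> E t.2 s.2 -> E (h t) (h s).

Definition k0 : 'I_3 := Ordinal (isT : 0 < 3).
Definition k1 : 'I_3 := Ordinal (isT : 1 < 3).
Definition k2 : 'I_3 := Ordinal (isT : 2 < 3).

Lemma inlist c : good c -> List_In (atom_of c) (pp_atoms phi).
Proof.
move=> G; apply: LI_map2; apply: LI_in; by rewrite mem_filter G mem_enum.
Qed.

Lemma pp_char u v : pp_holds E phi u v <->
  exists h : TT -> V, polyT h /\
    (forall a b c, u (enum_rank (a, b, c)) = h (a, a, b)) /\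
    (forall a b c, v (enum_rank (a, b, c)) = h (b, c, c)).
Proof.
split.
- case=> w H; exists (fun t => w (enum_rank t)); split; [|split].
  + move=> t s Ha Hb Hc.
    have := H _ (@inlist (k0, enum_rank t, enum_rank s) _); apply.
    by rewrite /good /= !enum_rankK Ha Hb Hc.
  + move=> a b c.
    have := H _ (@inlist (k1, enum_rank (a,b,c), enum_rank (a,a,b)) _); apply.
    by rewrite /good /= !enum_rankK.
  + move=> a b c.
    have := H _ (@inlist (k2, enum_rank (a,b,c), enum_rank (b,c,c)) _); apply.
    by rewrite /good /= !enum_rankK.
- case=> h [Hp [Hu Hv]]; exists (fun j => h (enum_val j)) => s at0 Ha.
  case: (LI_map Ha) => c [Hc <-].
  move: (LI_mem Hc); rewrite mem_filter => /andP [G _].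
  rewrite /s; case: c G {Hc Ha} => [[[[|[|[|k]]] Hk] i] j] //= G.
  + by case/and3P: G => G1 G2 G3; apply: Hp.
  + move/eqP: G => ->; rewrite enum_rankK -{1}(enum_valK i).
    by move: (enum_val i) => [[x y] z]; exact: Hu.
  + move/eqP: G => ->; rewrite enum_rankK -{1}(enum_valK i).
    by move: (enum_val i) => [[x y] z]; exact: Hv.
Qed.

Lemma no3 u1 u2 u3 u4 : ~ Pol_models_SigmaM E ->
  pp_holds E phi u1 u2 -> pp_holds E phi u2 u3 -> pp_holds E phi u3 u4 -> False.
Proof.
move=> nS /pp_char [h1 [_ [_ Hv1]]] /pp_char [h2 [P2 [Hu2 Hv2]]]
  /pp_char [h3 [_ [Hu3 _]]].
apply: nS; exists (fun a b c => h2 (a, b, c)); split.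
- by move=> a1 a2 a3 b1 b2 b3 e1 e2 e3; apply: (P2 (a1,a2,a3) (b1,b2,b3)).
- move=> x y; split.
  + have e1 := Hu2 y x x; have e2 := Hv1 y x x.
    have e3 := Hu2 x x x; have e4 := Hv1 x x x; congruence.
  + have e1 := Hv2 x x y; have e2 := Hu3 x x y.
    have e3 := Hv2 x x x; have e4 := Hu3 x x x; congruence.
Qed.

End Constr.

Theorem mainTheorem7 (V : finType) (E : rel V) :
  ~ Pol_models_SigmaM E -> pp_constructs E T3_edge.
Proof.
move=> nS; exists (dd V), (phi E); split.
- pose D := pp_holds E (phi E).
  pose r u : 'I_3 :=
    if excluded_middle_informative (exists x y, D x y /\ D y u) then k2
    else if excluded_middle_informative (exists x, D x u) then k1 else k0.
  exists r => u v Huv; rewrite /r.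
  case: (excluded_middle_informative (exists x y, D x y /\ D y u)) =>
    [[x [y [H1 H2]]]|n2u].
    by exfalso; apply: (no3 nS H1 H2 Huv).
  case: (excluded_middle_informative (exists x y, D x y /\ D y v)) => [Y2|n2v].
    by case: (excluded_middle_informative (exists x, D x u)).
  case: (excluded_middle_informative (exists x, D x v)) => [Y1|n1v];
    last by exfalso; apply: n1v; exists u.
  case: (excluded_middle_informative (exists x, D x u)) => [[x Hx]|Z] //.
  by exfalso; apply: n2v; exists x, u.
- pose g (k : 'I_3) : {ffun 'I_(dd V) -> V} := [ffun i =>
    let t := enum_val i in
    if val k == 0 then t.1.1 else if val k == 1 then t.1.2 else t.2].
  exists g => k l.
  case: k => [[|[|[|k]]] Hk]; case: l => [[|[|[|l]]] Hl] //= _; apply/pp_char.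
  + exists (fun t => t.1.1); split; first by move=> t s.
    by split=> a b c; rewrite /g !ffunE enum_rankK.
  + exists (fun t => t.1.2); split; first by move=> t s.
    by split=> a b c; rewrite /g !ffunE enum_rankK.
  + exists (fun t => t.2); split; first by move=> t s.
    by split=> a b c; rewrite /g !ffunE enum_rankK.
Qed.
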